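(* Let $t\ge 2$, $k\ge 1$, and let $C$ be a binary linear $t$-CIS $[tk,k]$ code with generator matrix $G=(A_1\ A_2\ \cdots\ A_t)$, where each $A_j$ is an invertible $k\times k$ matrix over $\mathbb{F}_2$; let $A_j(\mathbf r_i)$ denote the $i$-th row of $A_j$. Let $\mathbf x_1,\dots,\mathbf x_t\in\mathbb{F}_2^k$ and $y_{ij}\in\mathbb{F}_2$ ($1\le i\le k$, $1\le j\le t$) be arbitrary. For each $j$, let $c_{1j},\dots,c_{kj}\in\mathbb{F}_2$ be the unique elements with $\mathbf x_j=\sum_{i=1}^k c_{ij}A_j(\mathbf r_i)$, and set $z_j=1+\sum_{i=1}^k c_{ij}y_{ij}$. Then the $(k+1)\times t(k+1)$ matrix $$G_1=\begin{pmatrix} z_1 & \mathbf x_1 & z_2 & \mathbf x_2 & \cdots & z_t & \mathbf x_t\\ y_{11} & A_1(\mathbf r_1) & y_{12} & A_2(\mathbf r_1) & \cdots & y_{1t} & A_t(\mathbf r_1)\\ \vdots & \vdots & \vdots & \vdots & & \vdots & \vdots\\ y_{k1} & A_1(\mathbf r_k) & y_{k2} & A_2(\mathbf r_k) & \cdots & y_{kt} & A_t(\mathbf r_k)\end{pmatrix}$$ generates a binary linear $t$-CIS $[t(k+1),k+1]$ code.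
   Context: A binary linear $[tk,k]$ code is $t$-CIS if its coordinate set can be partitioned into $t$ pairwise disjoint information sets, an information set being a set of $k$ coordinates whose columns in a generator matrix are linearly independent. *)

(* Defs.v *)
From HB Require Import structures.
From mathcomp Require Import all_boot all_order all_algebra.
Set Implicit Arguments. Unset Strict Implicit. Unset Printing Implicit Defensive.
Import GRing.Theory.
Local Open Scope ring_scope.

(* Binary linear codes are given by a generator matrix over 'F_2; the code is
   the row space.  Coordinates are the column indices 'I_n. *)

Definition cols_of (k n : nat) (G : 'M['F_2]_(k, n)) (S : {set 'I_n})
  : 'M['F_2]_(k, #|S|) := colsub (fun i : 'I_#|S| => enum_val i) G.

Definition info_set (k n : nat) (G : 'M['F_2]_(k, n)) (S : {set 'I_n}) : bool :=
  (#|S| == k) && (\rank (cols_of G S) == #|S|).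

(* G (k x t*k) generates a binary linear [t k, k] code (i.e. G has rank k)
   which is t-CIS: the coordinate set is partitioned (via a block-assignment
   map P) into t pairwise disjoint information sets. *)
Definition is_tCIS (t k : nat) (G : 'M['F_2]_(k, t * k)) : Prop :=
  \rank G = k /\
  exists P : 'I_(t * k) -> 'I_t,
    forall j : 'I_t, info_set G [set p | P p == j].

(* The matrix (A_1 A_2 ... A_t), blocks placed side by side. *)
Definition concat_blocks (t k : nat) (A : 'I_t -> 'M['F_2]_k) : 'M['F_2]_(k, t * k) :=
  \matrix_(i < k) mxvec (\matrix_(j < t, l < k) A j i l).

(* The matrix G_1 of the statement: block j is the (k+1) x (k+1) matrix
   [ z_j  x_j ; y_{.j}  A_j ]. *)
Definition ext_block (t k : nat) (A : 'I_t -> 'M['F_2]_k) (x : 'I_t -> 'rV['F_2]_k)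
  (y : 'I_k -> 'I_t -> 'F_2) (z : 'I_t -> 'F_2) (j : 'I_t) (i l : 'I_k.+1) : 'F_2 :=
  match unlift ord0 i, unlift ord0 l with
  | None, None => z j
  | None, Some l' => x j ord0 l'
  | Some i', None => y i' j
  | Some i', Some l' => A j i' l'
  end.

Definition G1_matrix (t k : nat) (A : 'I_t -> 'M['F_2]_k) (x : 'I_t -> 'rV['F_2]_k)
  (y : 'I_k -> 'I_t -> 'F_2) (z : 'I_t -> 'F_2) : 'M['F_2]_(k.+1, t * k.+1) :=
  \matrix_(i < k.+1) mxvec (\matrix_(j < t, l < k.+1) ext_block A x y z j i l).

(* Main.v *)
Require Import Defs.
From HB Require Import structures.
From mathcomp Require Import all_boot all_order all_algebra.
Import GRing.Theory.
Local Open Scope ring_scope.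

Lemma rank_colsub_le (m n n' : nat) (g : 'I_n' -> 'I_n) (M : 'M['F_2]_(m, n)) :
  (\rank (colsub g M) <= \rank M)%N.
Proof.
have -> : colsub g M = M *m colsub g 1%:M by rewrite mulmx_colsub mulmx1.
exact: mxrankM_maxl.
Qed.

Section Blk.
Variables (t k : nat) (A : 'I_t -> 'M['F_2]_k) (x : 'I_t -> 'rV['F_2]_k)
  (y : 'I_k -> 'I_t -> 'F_2) (z : 'I_t -> 'F_2).

Definition Bj (j : 'I_t) : 'M['F_2]_k.+1 := \matrix_(i, l) ext_block A x y z j i l.

Lemma lift0_rshift (i : 'I_k) : lift ord0 i = rshift 1 i :> 'I_(1 + k).
Proof. by apply: val_inj. Qed.
Lemma ord0_lshift : (ord0 : 'I_k.+1) = lshift k (ord0 : 'I_1).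
Proof. by apply: val_inj. Qed.

Lemma Bj_block j : (Bj j : 'M_(1 + k)) = block_mx (z j)%:M (x j) (\col_i y i j) (A j).
Proof.
apply/matrixP => i l; rewrite mxE /ext_block.
case: (unliftP ord0 i) => [i'|] ->; case: (unliftP ord0 l) => [l'|] ->;
  rewrite ?liftK ?unlift_none.
- by rewrite !lift0_rshift block_mxEdr.
- by rewrite lift0_rshift ord0_lshift block_mxEdl mxE.
- by rewrite lift0_rshift ord0_lshift block_mxEur (ord1 ord0).
- by rewrite ord0_lshift block_mxEul mxE eqxx.
Qed.

Lemma Bj_unit j (hA : A j \in unitmx) (c : 'rV['F_2]_k)
  (hc : x j = \sum_(i < k) c ord0 i *: row i (A j))
  (hz : z j = 1 + \sum_(i < k) c ord0 i * y i j) : Bj j \in unitmx.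
Proof.
have hxj : x j = c *m A j by rewrite hc mulmx_sum_row.
have top : (z j)%:M - c *m (\col_i y i j) = 1%:M :> 'M_1.
  rewrite (mx11_scalar (c *m _)) -raddfB; congr (_%:M).
  rewrite mxE; under eq_bigr do rewrite mxE.
  by rewrite hz addrK.
have H : (block_mx 1%:M (- c) 0 1%:M *m (Bj j : 'M_(1 + k))) \in unitmx.
  rewrite Bj_block mulmx_block !mul1mx !mul0mx !add0r mulNmx top hxj -?mulNmx -mulmxDl subrr mul0mx.
  rewrite unitmxE det_lblock det1 mul1r -unitmxE; exact: hA.
by move: H; rewrite unitmx_mul => /andP[].
Qed.
End Blk.
Theorem proposition5 (t k : nat) (ht : (2 <= t)%N) (hk : (1 <= k)%N)
  (A : 'I_t -> 'M['F_2]_k)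
  (hA : forall j, A j \in unitmx)
  (hC : is_tCIS (concat_blocks A))
  (x : 'I_t -> 'rV['F_2]_k) (y : 'I_k -> 'I_t -> 'F_2)
  (c : 'I_t -> 'rV['F_2]_k)
  (hc : forall j, x j = \sum_(i < k) c j ord0 i *: row i (A j))
  (z : 'I_t -> 'F_2)
  (hz : forall j, z j = 1 + \sum_(i < k) c j ord0 i * y i j) :
  is_tCIS (G1_matrix A x y z).

Proof.
set G := G1_matrix A x y z.
pose P (p : 'I_(t * k.+1)) : 'I_t :=
  (enum_val (cast_ord (esym (mxvec_cast t k.+1)) p)).1.
pose Q (p : 'I_(t * k.+1)) : 'I_k.+1 :=
  (enum_val (cast_ord (esym (mxvec_cast t k.+1)) p)).2.
have PE j l : P (mxvec_index j l) = j by rewrite /P /mxvec_index cast_ordK enum_rankK.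
have QE j l : Q (mxvec_index j l) = l by rewrite /Q /mxvec_index cast_ordK enum_rankK.
have colE j : colsub (fun l => mxvec_index j l) G = @Bj t k A x y z j.
  by apply/matrixP => i l; rewrite !mxE mxvecE mxE.
have rkB j : \rank (@Bj t k A x y z j) = k.+1.
  by apply: mxrank_unit; exact: (@Bj_unit t k A x y z j (hA j) (c j) (hc j) (hz j)).
have t0 : (0 < t)%N by apply: leq_trans ht.
split.
  apply/eqP; rewrite eqn_leq rank_leq_row /=.
  rewrite -{1}(rkB (Ordinal t0)) -colE; exact: rank_colsub_le.
exists P => j.
have SE : [set p | P p == j] = [set mxvec_index j l | l : 'I_k.+1].
  apply/setP => p; case/mxvec_indexP: p => j' l; rewrite inE PE.
  apply/eqP/imsetP => [-> | [l' _ /(congr1 P)]]; first by exists l.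
  by rewrite !PE.
have card : #|[set p | P p == j]| = k.+1.
  rewrite SE card_imset ?card_ord // => a b /(congr1 Q).
  by rewrite !QE.
apply/andP; split; first by rewrite card.
rewrite eqn_leq rank_leq_col /= {1}card.
have x0 : mxvec_index j ord0 \in [set p | P p == j] by rewrite inE PE.
pose g (l : 'I_k.+1) := enum_rank_in x0 (mxvec_index j l).
rewrite -{1}(rkB j) -colE.
have -> : colsub (fun l => mxvec_index j l) G = colsub g (cols_of G [set p | P p == j]).
  rewrite /cols_of -colsub_comp; apply: eq_colsub => l /=.
  by rewrite /g enum_rankK_in // inE PE.
exact: rank_colsub_le.
Qed.
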